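(* Let $k\ge 2$ and $0<\lambda\le\frac{1}{3k}$, and consider the common-chunk-protocol Markov process with $L_1(\mathbf{x})=\sum_{i=1}^k \bar S_i$. Then there exists $\epsilon>0$ such that $\Delta L_1(\mathbf{x})<-\epsilon$ for every state $\mathbf{x}$ with $S>3k^3$.
   Context: Model: Fix an integer $k\ge 2$ (number of chunks of a file) and $\lambda>0$. There is always exactly one seed holding all $k$ chunks. Non-seed peers arrive according to a Poisson process of rate $\lambda$, each arriving with no chunks; each non-seed peer holds a subset (its profile) of $\{1,\dots,k\}$ and leaves the system immediately once it holds all $k$ chunks. The state $\mathbf{x}$ of the continuous-time Markov process is the number of non-seed peers with each profile. $S$ denotes the total number of peers present, including the seed. Each non-seed peer has an independent rate-1 Poisson clock; at each tick it draws a sample of peers independently and uniformly at random with replacement from the current $S$ peers (seed and itself included) and may instantaneously download at most one chunk that it lacks and that is held by some sampled peer (such a chunk is a ''match''). Counting draws with multiplicity, a chunk is ''rare'' in a sample of 3 draws if exactly one of the 3 draws holds it. Common chunk protocol: (i) a peer with no chunks draws 3 peers and downloads a chunk chosen uniformly among the rare matches, if there is any, otherwise nothing; (ii) a peer holding at least 1 and at most $k-2$ chunks draws 1 peer and downloads a uniformly chosen match, if any, otherwise nothing; (iii) a peer holding exactly $k-1$ chunks draws 3 peers and downloads its missing chunk only if that chunk is held by some draw and every chunk it holds is held by at least 2 of the 3 draws; otherwise nothing. Notation: $S_i$ ($1\le i\le k$) is the number of peers, including the seed, holding chunk $i$; $\bar S_i=S-S_i$. For a function $f$ on the state space, with $q(\mathbf{x},\mathbf{x}')$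 the transition rates of the Markov process, the drift is $\Delta f(\mathbf{x})=\sum_{\mathbf{x}'\neq\mathbf{x}} q(\mathbf{x},\mathbf{x}')\,(f(\mathbf{x}')-f(\mathbf{x}))$. *)

(* Defs.v *)
From HB Require Import structures.
From mathcomp Require Import all_boot all_order all_algebra.
Set Implicit Arguments. Unset Strict Implicit. Unset Printing Implicit Defensive.
Import Order.TTheory GRing.Theory Num.Theory.

(* Chunks are 'I_k (chunk i+1 of the paper is ordinal i).  A profile is a
   {set 'I_k}.  A state records, for every profile, the number of non-seed
   peers with that profile; non-seed peers never hold all chunks, so valid
   states satisfy x [set: 'I_k] = 0. *)
Definition state (k : nat) := {ffun {set 'I_k} -> nat}.

Section Model.
Variable k : nat.
Implicit Types (x : state k) (A B : {set 'I_k}) (j : 'I_k).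

(* number of peers (seed included) with profile B: the seed is the unique
   peer with full profile *)
Definition cnt x B : nat := if B == [set: 'I_k] then 1%N else x B.

Definition Stot x : nat := \sum_(B : {set 'I_k}) cnt x B.

Definition Schunk x (i : 'I_k) : nat := \sum_(B : {set 'I_k} | i \in B) cnt x B.

Definition Sbar x (i : 'I_k) : nat := Stot x - Schunk x i.

Definition mult3 (B1 B2 B3 : {set 'I_k}) (i : 'I_k) : nat :=
  ((i \in B1) + (i \in B2) + (i \in B3))%N.

Definition rare3 (B1 B2 B3 : {set 'I_k}) : {set 'I_k} :=
  [set i | mult3 B1 B2 B3 i == 1%N].

Section Rates.
Variable R : realFieldType.
Local Open Scope ring_scope.

Definition pdraw x B : R := (cnt x B)%:R / (Stot x)%:R.

Definition pdraw3 x B1 B2 B3 : R := pdraw x B1 * pdraw x B2 * pdraw x B3.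

(* Probability that, at a clock tick, a peer with profile A downloads chunk j
   under the common chunk protocol. *)
Definition pdl x A j : R :=
  if j \in A then 0 else
  if #|A| == 0%N then
    (* (i): three draws, uniform among rare matches (all chunks are lacking) *)
    \sum_(B1 : {set 'I_k}) \sum_(B2 : {set 'I_k}) \sum_(B3 : {set 'I_k})
      pdraw3 x B1 B2 B3 *
      (if j \in rare3 B1 B2 B3 then (#|rare3 B1 B2 B3|%:R)^-1 else 0)
  else if #|A| == k.-1 then
    (* (iii): three draws; get missing chunk j iff some draw holds it and
       each held chunk is held by at least 2 of the 3 draws *)
    \sum_(B1 : {set 'I_k}) \sum_(B2 : {set 'I_k}) \sum_(B3 : {set 'I_k})
      pdraw3 x B1 B2 B3 *
      (if (j \in B1 :|: B2 :|: B3) && [forall i in A, (2 <= mult3 B1 B2 B3 i)%N]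
       then 1 else 0)
  else
    (* (ii): 1 <= |A| <= k-2, one draw, uniform among matches *)
    \sum_(B : {set 'I_k}) pdraw x B *
      (if j \in B :\: A then (#|B :\: A|%:R)^-1 else 0).

End Rates.

Definition arrive x : state k :=
  [ffun B => if B == set0 then (x B).+1 else x B].

(* a peer with profile A downloads chunk j (j \notin A); it leaves if it
   then holds all chunks *)
Definition move x A j : state k :=
  [ffun B => if B == A then (x B).-1
             else if (B == j |: A) && (B != [set: 'I_k]) then (x B).+1
             else x B].

(* Drift  Delta f(x) = sum_{x' <> x} q(x,x') (f x' - f x), written as a sum
   over the possible transitions: arrivals at rate lambda, and, for each
   profile A and chunk j, downloads of j by some peer with profile A at rate
   x_A * pdl x A j (each of the x_A peers has a rate-1 clock). *)
Definition drift (R : realFieldType) (lam : R) (f : state k -> R) x : R :=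
  (lam * (f (arrive x) - f x) +
   \sum_(A : {set 'I_k}) \sum_(j : 'I_k)
      (x A)%:R * @pdl R x A j * (f (move x A j) - f x))%R.

Definition L1 (R : realFieldType) x : R := (\sum_(i : 'I_k) (Sbar x i)%:R)%R.

End Model.

(* Main.v *)
Require Import Defs.
From HB Require Import structures.
From mathcomp Require Import all_boot all_order all_algebra ring lra zify.
Import Order.TTheory GRing.Theory Num.Theory.
Set Implicit Arguments. Unset Strict Implicit. Unset Printing Implicit Defensive.

Section Num.
Local Open Scope ring_scope.
Variable R : realFieldType.

Lemma N1 (a S : R) : 0 <= a -> 25 <= S -> 1 <= S * (1 - a) ->
  a - 1/10 <= 3 * a ^+ 3 * (S * (1 - a)).
Proof.
move=> ha hS h1.
have a3 : 0 <= a ^+ 3 by rewrite exprn_ge0.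
have [h|h] := lerP (3/5) a.
  have : a <= 3 * a ^+ 3.
    have h2 : 0 <= a * (a - 3/5) by rewrite mulr_ge0 // subr_ge0.
    have h3 : 0 <= a * (a * (a - 3/5)) by rewrite mulr_ge0.
    have -> : a ^+ 3 = a * (a * a) by rewrite !exprS expr0 mulr1.
    nra.
  have : 0 <= 3 * a ^+ 3 * (S * (1 - a) - 1) by rewrite mulr_ge0 ?subr_ge0 // mulr_ge0.
  lra.
have h10 : 10 <= S * (1 - a).
  have : 0 <= (S - 25) * (1 - a) by rewrite mulr_ge0 ?subr_ge0 //; lra.
  lra.
have : a - 1/10 <= 30 * a ^+ 3.
  have := sqr_ge0 (a - 1/10). nra.
have : 0 <= 3 * a ^+ 3 * (S * (1 - a) - 10) by rewrite mulr_ge0 ?subr_ge0 // mulr_ge0.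
lra.
Qed.

Lemma N2a (m s : R) : 0 <= s -> s <= m -> m <= 1 ->
  (m + s) ^+ 4 <= m ^+ 3 * (1 + 25 * s).
Proof.
move=> hs hsm hm.
have h0 : 0 <= m by lra.
have ms : 0 <= m - s by lra.
have p1 : 0 <= m * m * s * (m - s) by rewrite !mulr_ge0.
have p2 : 0 <= m * s * (m * m - s * s).
  rewrite !mulr_ge0 // subr_ge0; by apply: ler_pM.
have p3 : 0 <= s * (m * m * m - s * s * s).
  rewrite mulr_ge0 // subr_ge0; apply: ler_pM; rewrite ?mulr_ge0 //; by apply: ler_pM.
have p4 : 0 <= m * m * m * (1 - m) by rewrite !mulr_ge0 // subr_ge0.
have p5 : 0 <= m * m * m * s by rewrite !mulr_ge0.
have -> : (m + s) ^+ 4 = m^+4 + 4 * m ^+ 3 * s + 6 * m^+2 * s^+2 + 4 * m * s ^+ 3 + s ^+ 4.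
  by ring.
have -> : m ^+ 4 = m * m * m * m by rewrite !exprS expr0 mulr1 ?mulrA.
have -> : m ^+ 3 = m * m * m by rewrite !exprS expr0 mulr1 ?mulrA.
have -> : m ^+ 2 = m * m by rewrite !exprS expr0 mulr1 ?mulrA.
have -> : s ^+ 3 = s * s * s by rewrite !exprS expr0 mulr1 ?mulrA.
have -> : s ^+ 4 = s * s * s * s by rewrite !exprS expr0 mulr1 ?mulrA.
have -> : s ^+ 2 = s * s by rewrite !exprS expr0 mulr1 ?mulrA.
nra.
Qed.

Lemma N2 (m c S kk : R) : 0 <= m -> m <= c -> c <= 1 -> c <= kk * m ->
  0 < kk -> 3 * kk ^+ 3 <= S -> 25 <= S ->
  c - 2/5 <= 3 * m ^+ 3 * (1 + S * (c - m)).
Proof.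
move=> hm hmc hc hck hk hS hS25.
have c0 : 0 <= c by lra.
have m3 : 0 <= m ^+ 3 by rewrite exprn_ge0.
have [h|h] := lerP m (c / 2).
  have hcm : c / 2 <= c - m by lra.
  have k3 : c ^+ 3 <= kk ^+ 3 * m ^+ 3.
    rewrite -exprMn; apply: lerXn2r; rewrite ?nnegrE //; nra.
  have Sm : 3 * c ^+ 3 <= S * m ^+ 3.
    have : 0 <= (S - 3 * kk ^+ 3) * m ^+ 3 by rewrite mulr_ge0 // subr_ge0.
    nra.
  have : 3 * m ^+ 3 * (1 + S * (c - m)) >= 3 * (S * m ^+ 3) * (c / 2).
    have : 0 <= S * m ^+ 3 * (c - m - c / 2) by rewrite !mulr_ge0 ?subr_ge0 //; lra.
    nra.
  have : 3 * (3 * c ^+ 3) * (c / 2) <= 3 * (S * m ^+ 3) * (c / 2).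
    by rewrite ler_wpM2r ?ler_wpM2l //; lra.
  have : c - 2/5 <= 9/2 * c ^+ 4.
    have h1 := sqr_ge0 (c ^+ 2 - 1/7).
    have h2 := sqr_ge0 (c - 7/18).
    have -> : c ^+ 4 = (c ^+ 2) ^+ 2 by rewrite -exprM.
    nra.
  have -> : c ^+ 4 = c ^+ 3 * c by rewrite exprSr.
  lra.
have hs : c - m <= m by lra.
have hmc1 := @N2a m (c - m) ltac:(lra) hs ltac:(lra).
rewrite addrC subrK in hmc1.
have : 0 <= m ^+ 3 * ((S - 25) * (c - m)) by rewrite !mulr_ge0 ?subr_ge0 //; lra.
have : c - 2/5 <= 3 * c ^+ 4.
  have h1 := sqr_ge0 (c ^+ 2 - 1/5).
  have h2 := sqr_ge0 (c - 5/12).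
  have -> : c ^+ 4 = (c ^+ 2) ^+ 2 by rewrite -exprM.
  nra.
nra.
Qed.


Lemma Nfinal (S n0 nm n3 M kk : R) : 2 <= kk -> 3 * kk ^+ 3 + 1 <= S ->
  0 <= n0 -> 0 <= nm -> 0 <= M -> M <= n3 -> n3 <= kk * M ->
  S = 1 + n0 + nm + n3 ->
  9/20 <= n0 * (3 * (n0 / S) ^+ 2 * (1 - n0 / S)) + nm / S +
          M * (3 * (M / S) ^+ 2 * ((1 + (n3 - M)) / S)).
Proof.
move=> hk hS h0 hm hM hMn hn3 hSe.
have k3 : 8 <= kk ^+ 3.
  have -> : (8 : R) = 2 ^+ 3 by rewrite -natrX.
  by apply: lerXn2r; rewrite ?nnegrE //; lra.
have S25 : 25 <= S by lra.
have Sp : 0 < S by lra.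
have Sn : S != 0 by rewrite gt_eqF.
set a := n0 / S; set b := nm / S; set c := n3 / S; set m := M / S.
have ea : n0 = a * S by rewrite /a mulfVK.
have eb : nm = b * S by rewrite /b mulfVK.
have ec : n3 = c * S by rewrite /c mulfVK.
have em : M = m * S by rewrite /m mulfVK.
have a0 : 0 <= a by rewrite /a divr_ge0 // ltW.
have m0 : 0 <= m by rewrite /m divr_ge0 // ltW.
have T1 : n0 * (3 * a ^+ 2 * (1 - a)) = 3 * a ^+ 3 * (S * (1 - a)).
  by rewrite ea; ring.
have T3 : M * (3 * m ^+ 2 * ((1 + (n3 - M)) / S)) = 3 * m ^+ 3 * (1 + S * (c - m)).
  by rewrite em ec; field.
have hsum : a + b + c = 1 - 1 / S.
  have -> : 1 - 1 / S = (S - 1) / S by field.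
  by rewrite /a /b /c -!mulrDl; congr (_ / _); lra.
have eS : S * (1 - a) = S - n0 by rewrite ea; ring.
have H1 := @N1 a S a0 S25 ltac:(rewrite eS; lra).
have H2 := @N2 m c S kk m0 ltac:(rewrite /m /c ler_pM2r ?invr_gt0 //)
  ltac:(rewrite /c ler_pdivrMr // mul1r; lra)
  ltac:(rewrite /c /m mulrA ler_pM2r ?invr_gt0 //) ltac:(lra) ltac:(lra) S25.
rewrite T1 -/b T3.
have : 1 / S <= 1 / 25 by rewrite ler_pdivrMr // mulrC mulrA ler_pdivlMr; lra.
lra.
Qed.

End Num.

Section Drift.
Variable R : realFieldType.
Variable k : nat.
Local Open Scope ring_scope.
Implicit Types (x : state k).

Definition wt (B : {set 'I_k}) : R := (#|~: B|)%:R.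

Lemma SbarE x i : Sbar x i = (\sum_(B : {set 'I_k} | i \notin B) cnt x B)%N.
Proof.
rewrite /Sbar /Stot /Schunk (bigID (fun B : {set 'I_k} => i \in B)) /=.
by rewrite addKn.
Qed.

Lemma L1E x : L1 R x = \sum_(B : {set 'I_k}) (x B)%:R * wt B.
Proof.
rewrite /L1.
under eq_bigr => i _ do rewrite SbarE natr_sum big_mkcond /=.
rewrite exchange_big /=; apply: eq_bigr => B _.
rewrite -big_mkcond /= sumr_const.
have -> : #|[pred i | i \notin B]| = #|~: B|.
  by apply: eq_card => i; rewrite !inE.
rewrite /wt /cnt; case: eqP => [->|_].
  by rewrite setCT cards0 !mulr0n mulr0.
by rewrite mulr_natr.
Qed.


Lemma L1_arrive x : L1 R (arrive x) - L1 R x = k%:R.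
Proof.
rewrite !L1E -sumrB (bigD1 set0) //= big1 ?addr0.
  rewrite /arrive ffunE eqxx /wt setC0 cardsT card_ord -mulrBl.
  by rewrite -natrB // subSnn mul1r.
move=> B /negPf HB; rewrite /arrive ffunE HB.
by rewrite -mulrBl subrr mul0r.
Qed.

Lemma L1_move x A j : x A != 0%N -> j \notin A ->
  L1 R (move x A j) - L1 R x = -1.
Proof.
move=> hA hj.
have hne : j |: A != A.
  by apply/eqP => /setP /(_ j); rewrite !inE eqxx /= (negPf hj).
rewrite !L1E -sumrB (bigD1 A) //= (bigD1 (j |: A)) //= big1 ?addr0.
  rewrite /move !ffunE eqxx (negPf hne) eqxx /=.
  have e1 : (x A).-1%:R * wt A - (x A)%:R * wt A = - wt A.
    have hp : (0 < x A)%N by rewrite lt0n.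
    rewrite -mulrBl -{2}(prednK hp) -addn1 natrD.
    by rewrite opprD addrA subrr add0r mulN1r.
  have e2 : ((if j |: A != [set: 'I_k] then (x (j |: A)).+1 else x (j |: A))%:R *
   wt (j |: A) - (x (j |: A))%:R * wt (j |: A)) = wt (j |: A).
    case: ifP => [_|/negbFE/eqP ->].
      by rewrite -mulrBl -addn1 natrD addrAC subrr add0r mul1r.
    by rewrite subrr /wt setCT cards0.
  rewrite e1 e2 /wt.
  have -> : #|~: A| = (#|~: (j |: A)|).+1.
    rewrite (cardsD1 j (~: A)) !inE hj /= add1n; congr (_.+1).
    by apply: eq_card => i; rewrite !inE negb_or.
  by rewrite -addn1 natrD opprD addrAC addNr add0r.
move=> B /andP [hB1 hB2]; rewrite /move ffunE (negPf hB1) (negPf hB2) /=.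
by rewrite subrr.
Qed.


Lemma driftE lam x :
  drift lam (@L1 k R) x = lam * k%:R -
    \sum_(A : {set 'I_k}) \sum_(j : 'I_k) (x A)%:R * pdl R x A j.
Proof.
rewrite /drift L1_arrive; congr (_ + _).
rewrite -[RHS]sumrN; apply: eq_bigr => A _; rewrite -[RHS]sumrN; apply: eq_bigr => j _.
have [/eqP ->|hA] := boolP (x A == 0%N); first by rewrite !mul0r oppr0.
have [hj|hj] := boolP (j \in A); first by rewrite /pdl hj mulr0 mul0r oppr0.
by rewrite L1_move // mulrN1.
Qed.


Lemma Stot_pos x : (0 < Stot x)%N.
Proof.
rewrite /Stot (bigD1 [set: 'I_k]) //= /cnt eqxx.
by rewrite add1n.
Qed.

Lemma SR_gt0 x : 0 < (Stot x)%:R :> R.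
Proof. by rewrite ltr0n Stot_pos. Qed.

Lemma pdraw_ge0 x B : 0 <= pdraw R x B.
Proof. by rewrite /pdraw divr_ge0 ?ler0n. Qed.

Lemma sum_pdraw x : \sum_(B : {set 'I_k}) pdraw R x B = 1.
Proof.
rewrite /pdraw -mulr_suml -natr_sum -/(Stot x) divff //.
by rewrite gt_eqF ?SR_gt0.
Qed.

Lemma sum3 (f g h : {set 'I_k} -> R) :
  \sum_(B1 : {set 'I_k}) \sum_(B2 : {set 'I_k}) \sum_(B3 : {set 'I_k})
     f B1 * g B2 * h B3 =
  (\sum_B f B) * (\sum_B g B) * (\sum_B h B).
Proof.
under eq_bigr => B1 _ do under eq_bigr => B2 _ do rewrite -mulr_sumr.
under eq_bigr => B1 _ do rewrite -mulr_suml.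
rewrite -mulr_suml.
under eq_bigr => B1 _ do rewrite -mulr_sumr.
by rewrite -mulr_suml.
Qed.

Lemma sum_eq (f : {set 'I_k} -> R) C :
  \sum_(B : {set 'I_k}) f B * (B == C)%:R = f C.
Proof.
rewrite (bigD1 C) //= eqxx mulr1 big1 ?addr0 //.
by move=> B /negPf ->; rewrite mulr0.
Qed.

Lemma sum_inv_card (C : {set 'I_k}) :
  \sum_(j : 'I_k) (if j \in C then (#|C|%:R)^-1 else 0) = (C != set0)%:R :> R.
Proof.
rewrite -big_mkcond /= sumr_const.
have [->|hC] := eqVneq C set0; first by rewrite cards0 mulr0n.
by rewrite /= -[LHS]mulr_natr mulVf // pnatr_eq0 cards_eq0.
Qed.


Lemma pdraw3_ge0 x B1 B2 B3 : 0 <= pdraw3 R x B1 B2 B3.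
Proof. by rewrite /pdraw3; apply: mulr_ge0; [apply: mulr_ge0|]; apply: pdraw_ge0. Qed.

Lemma pdl_ge0 x A j : 0 <= pdl R x A j.
Proof.
rewrite /pdl; case: ifP => _ //; case: ifP => _; [|case: ifP => _].
- apply: sumr_ge0 => B1 _; apply: sumr_ge0 => B2 _; apply: sumr_ge0 => B3 _.
  apply: mulr_ge0; first exact: pdraw3_ge0.
  by case: ifP => _; rewrite ?invr_ge0 ?ler0n.
- apply: sumr_ge0 => B1 _; apply: sumr_ge0 => B2 _; apply: sumr_ge0 => B3 _.
  apply: mulr_ge0; first exact: pdraw3_ge0.
  by case: ifP => _; rewrite ?ler01.
- apply: sumr_ge0 => B _; apply: mulr_ge0; first exact: pdraw_ge0.
  by case: ifP => _; rewrite ?invr_ge0 ?ler0n.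
Qed.

Lemma sum3_split (F G H : {set 'I_k} -> {set 'I_k} -> {set 'I_k} -> R) :
  \sum_(B1 : {set 'I_k}) \sum_(B2 : {set 'I_k}) \sum_(B3 : {set 'I_k})
     (F B1 B2 B3 + G B1 B2 B3 + H B1 B2 B3) =
  \sum_(B1 : {set 'I_k}) \sum_(B2 : {set 'I_k}) \sum_(B3 : {set 'I_k}) F B1 B2 B3 +
  \sum_(B1 : {set 'I_k}) \sum_(B2 : {set 'I_k}) \sum_(B3 : {set 'I_k}) G B1 B2 B3 +
  \sum_(B1 : {set 'I_k}) \sum_(B2 : {set 'I_k}) \sum_(B3 : {set 'I_k}) H B1 B2 B3.
Proof.
rewrite -!big_split; apply: eq_bigr => B1 _.
rewrite -!big_split; apply: eq_bigr => B2 _.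
by rewrite -!big_split.
Qed.

Lemma sum_ne (C : {set 'I_k}) x :
  \sum_(B : {set 'I_k}) pdraw R x B * (B != C)%:R = 1 - pdraw R x C.
Proof.
rewrite -[X in X - _](sum_pdraw x) -[X in _ - X](sum_eq (pdraw R x) C) -sumrB.
by apply: eq_bigr => B _; case: eqP => _ /=; rewrite ?mulr0 ?mulr1 ?subr0 ?subrr.
Qed.

Lemma mult00 (B : {set 'I_k}) i :
  [/\ mult3 set0 set0 B i = (i \in B) :> nat,
      mult3 set0 B set0 i = (i \in B) :> nat &
      mult3 B set0 set0 i = (i \in B) :> nat].
Proof. by rewrite /mult3 !inE /= ?addn0. Qed.

Lemma rare00 (B : {set 'I_k}) :
  [/\ rare3 set0 set0 B = B, rare3 set0 B set0 = B & rare3 B set0 set0 = B].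
Proof.
by split; apply/setP => i; rewrite /rare3 /mult3 !inE /=; case: (i \in B).
Qed.

Lemma P0_lb x : (0 < k)%N ->
  3 * pdraw R x set0 ^+ 2 * (1 - pdraw R x set0) <=
  \sum_(j : 'I_k) pdl R x set0 j.
Proof.
move=> hk.
have E j : pdl R x set0 j = \sum_(B1 : {set 'I_k}) \sum_(B2 : {set 'I_k}) \sum_(B3 : {set 'I_k})
      pdraw3 R x B1 B2 B3 *
      (if j \in rare3 B1 B2 B3 then (#|rare3 B1 B2 B3|%:R)^-1 else 0).
  by rewrite /pdl inE cards0 eqxx.
under eq_bigr do rewrite E.
rewrite exchange_big /=.
under eq_bigr do rewrite exchange_big /=.
under eq_bigr do under eq_bigr do rewrite exchange_big /=.
under eq_bigr do under eq_bigr do under eq_bigr do rewrite -mulr_sumr sum_inv_card.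
set e := fun B : {set 'I_k} => pdraw R x B * (B == set0)%:R.
set ne := fun B : {set 'I_k} => pdraw R x B * (B != set0)%:R.
have -> : 3 * pdraw R x set0 ^+ 2 * (1 - pdraw R x set0) =
  \sum_(B1 : {set 'I_k}) \sum_(B2 : {set 'I_k}) \sum_(B3 : {set 'I_k})
     (e B1 * e B2 * ne B3 + e B1 * ne B2 * e B3 + ne B1 * e B2 * e B3).
  rewrite sum3_split !sum3 /e /ne !sum_eq !sum_ne; ring.
apply: ler_sum => B1 _; apply: ler_sum => B2 _; apply: ler_sum => B3 _.
rewrite /e /ne.
rewrite [X in X <= _](_ : _ = pdraw3 R x B1 B2 B3 *
  ((B1 == set0)%:R * (B2 == set0)%:R * (B3 != set0)%:R +
   (B1 == set0)%:R * (B2 != set0)%:R * (B3 == set0)%:R +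
   (B1 != set0)%:R * (B2 == set0)%:R * (B3 == set0)%:R)); last first.
  by rewrite /pdraw3; ring.
apply: ler_wpM2l; first exact: pdraw3_ge0.
have [->|h1] := eqVneq B1 set0; have [->|h2] := eqVneq B2 set0;
  have [->|h3] := eqVneq B3 set0;
  rewrite ?eqxx ?(negPf h1) ?(negPf h2) ?(negPf h3) /= ?mulr0 ?mul0r ?addr0 ?add0r ?mulr1;
  try (by case: (rare3 _ _ _ != set0));
  first [ by case: (rare00 B3) => [-> _ _]; rewrite ?h3
        | by case: (rare00 B2) => [_ -> _]; rewrite ?h2
        | by case: (rare00 B1) => [_ _ ->]; rewrite ?h1 ].
Qed.


Lemma setC_neq0 (A : {set 'I_k}) : A != [set: 'I_k] -> ~: A != set0.
Proof.
apply: contraNneq => h; by rewrite -(setCK A) h setC0.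
Qed.

Lemma Pmid_lb x A : A != [set: 'I_k] -> #|A| != 0%N -> #|A| != k.-1 ->
  pdraw R x [set: 'I_k] <= \sum_(j : 'I_k) pdl R x A j.
Proof.
move=> hT h0 h1.
have E j : pdl R x A j = \sum_(B : {set 'I_k}) pdraw R x B *
      (if j \in B :\: A then (#|B :\: A|%:R)^-1 else 0).
  rewrite /pdl (negPf h0) (negPf h1); case: ifP => // hj.
  by rewrite big1 // => B _; rewrite inE hj /= mulr0.
under eq_bigr do rewrite E.
rewrite exchange_big /=.
under eq_bigr do rewrite -mulr_sumr sum_inv_card.
rewrite (bigD1 [set: 'I_k]) //= setTD (setC_neq0 hT) mulr1 lerDl.
by apply: sumr_ge0 => B _; rewrite mulr_ge0 ?pdraw_ge0 ?ler0n.
Qed.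


Lemma P3_lb x (A : {set 'I_k}) (j : 'I_k) : (1 < k)%N -> #|A| = k.-1 -> j \notin A ->
  3 * pdraw R x A ^+ 2 * (\sum_(B : {set 'I_k}) pdraw R x B * (j \in B)%:R)
  <= \sum_(j' : 'I_k) pdl R x A j'.
Proof.
move=> hk hA hj.
apply: le_trans (_ : pdl R x A j <= _); last first.
  rewrite (bigD1 j) //= lerDl; apply: sumr_ge0 => *; exact: pdl_ge0.
have hA0 : #|A| != 0%N by rewrite hA -lt0n; case: k hk => // [] [].
rewrite /pdl (negPf hj) (negPf hA0) hA eqxx.
set f := fun B : {set 'I_k} => pdraw R x B * (j \in B)%:R.
set g := fun B : {set 'I_k} => pdraw R x B * (B == A)%:R.
have -> : 3 * pdraw R x A ^+ 2 * (\sum_(B : {set 'I_k}) f B) =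
  \sum_(B1 : {set 'I_k}) \sum_(B2 : {set 'I_k}) \sum_(B3 : {set 'I_k})
     (f B1 * g B2 * g B3 + g B1 * f B2 * g B3 + g B1 * g B2 * f B3).
  rewrite sum3_split !sum3 /g !sum_eq; ring.
apply: ler_sum => B1 _; apply: ler_sum => B2 _; apply: ler_sum => B3 _.
rewrite /f /g.
rewrite [X in X <= _](_ : _ = pdraw3 R x B1 B2 B3 *
  ((j \in B1)%:R * (B2 == A)%:R * (B3 == A)%:R +
   (B1 == A)%:R * (j \in B2)%:R * (B3 == A)%:R +
   (B1 == A)%:R * (B2 == A)%:R * (j \in B3)%:R)); last first.
  by rewrite /pdraw3; ring.
apply: ler_wpM2l; first exact: pdraw3_ge0.
have fa : forall C D E : {set 'I_k}, C = A \/ D = A \/ E = A ->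
   (C = A /\ D = A) \/ (C = A /\ E = A) \/ (D = A /\ E = A) ->
   [forall i in A, (2 <= mult3 C D E i)%N].
  move=> C D E _ H; apply/forall_inP => i hi; rewrite /mult3.
  by case: H => [[-> ->]|[[-> ->]|[-> ->]]]; rewrite hi; case: (i \in _).
have [->|h1] := eqVneq B1 A; have [->|h2] := eqVneq B2 A;
  have [->|h3] := eqVneq B3 A;
  rewrite ?eqxx ?(negPf h1) ?(negPf h2) ?(negPf h3) ?(negPf hj) /= ?mulr0 ?mul0r ?addr0 ?add0r ?mulr1 ?mul1r;
  try (by case: ifP);
  rewrite fa; try (by auto); rewrite !inE ?(negPf hj) ?orbF /=;
  by case: (j \in _).
Qed.


Definition cls : {set {set 'I_k}} := [set B : {set 'I_k} | #|B| == k.-1].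
Definition mid (B : {set 'I_k}) : bool :=
  [&& B != set0, B != [set: 'I_k] & #|B| != k.-1].

Lemma card_cls : (0 < k)%N -> #|cls| = k.
Proof.
move=> hk; rewrite /cls card_draws card_ord -subn1 bin_sub ?bin1 //.
Qed.

Lemma eq_setC1 (A : {set 'I_k}) j : #|A| = k.-1 -> j \notin A -> A = [set~ j].
Proof.
move=> hA hj; apply/eqP; rewrite eqEcard cardsC1 card_ord hA leqnn andbT.
apply/subsetP => i hi; rewrite !inE; apply: contraNneq hj => <-; exact: hi.
Qed.

Lemma cls_other (A B : {set 'I_k}) j : #|A| = k.-1 -> j \notin A ->
  #|B| = k.-1 -> B != A -> j \in B.
Proof.
move=> hA hj hB hBA; apply: contraNT hBA => hjB.
by rewrite (eq_setC1 hA hj) (eq_setC1 hB hjB).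
Qed.

Lemma setT_neq0 : (0 < k)%N -> [set: 'I_k] != set0.
Proof.
move=> hk; apply/eqP => h; have := cardsT 'I_k; rewrite h cards0 card_ord.
by move=> h0; rewrite -h0 in hk.
Qed.

Lemma Stot_decomp x : (1 < k)%N ->
  Stot x = (1 + x set0 + \sum_(B : {set 'I_k} | mid B) x B + \sum_(B in cls) x B)%N.
Proof.
move=> hk.
have hk0 : (0 < k)%N by apply: ltn_trans hk.
rewrite /Stot (bigD1 [set: 'I_k]) //= {1}/cnt eqxx -!addnA; congr (_ + _)%N.
rewrite (bigD1 set0) /=; last by rewrite eq_sym setT_neq0.
rewrite /cnt (negPf (_ : set0 != [set: 'I_k])) ?[set0 == _]eq_sym ?setT_neq0 //.
congr (_ + _)%N.
rewrite (bigID (fun B : {set 'I_k} => #|B| == k.-1)) /= addnC; congr (_ + _)%N.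
  apply: eq_big => B.
    rewrite /mid; case: (B =P set0) => [->|_]; first by rewrite andbF.
    by case: (B =P [set: 'I_k]) => //= ->; rewrite andbF.
  by move=> /andP [/andP [/negPf ->]].
apply: eq_big => B.
    rewrite inE andbC; case: eqP => hB //=.
  apply/andP; split; apply/negP => /eqP hB'; move: hB; rewrite hB'.
    by rewrite cardsT card_ord; lia.
  by rewrite cards0; lia.
by move=> /andP [/andP [/negPf ->]].
Qed.



Lemma setT_notin_cls : (0 < k)%N -> ([set: 'I_k] \in cls) = false.
Proof. by move=> hk; rewrite inE cardsT card_ord; apply/eqP; lia. Qed.

Lemma h_lb x (As : {set 'I_k}) (j : 'I_k) : (1 < k)%N -> As \in cls -> j \notin As ->
  (1 + (\sum_(B in cls | B != As) x B)%N%:R) / (Stot x)%:R <=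
  \sum_(B : {set 'I_k}) pdraw R x B * (j \in B)%:R.
Proof.
move=> hk hAs hj.
have hk0 : (0 < k)%N by apply: ltn_trans hk.
have hAc : #|As| = k.-1 by move: hAs; rewrite inE => /eqP.
apply: le_trans (_ : \sum_(B : {set 'I_k}) pdraw R x B *
   ((B == [set: 'I_k])%:R + ((B \in cls) && (B != As))%:R) <= _); last first.
  apply: ler_sum => B _; apply: ler_wpM2l; first exact: pdraw_ge0.
  have [->|hT] := eqVneq B [set: 'I_k].
    by rewrite setT_notin_cls // inE addr0.
  rewrite /= add0r.
  have [/andP [hB hBA]|_] := boolP ((B \in cls) && (B != As)); last by rewrite ler0n.
  by rewrite (cls_other hAc hj) //; move: hB; rewrite inE => /eqP.
rewrite [X in _ <= X](eq_bigr (fun B => pdraw R x B * (B == [set: 'I_k])%:R +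
   pdraw R x B * ((B \in cls) && (B != As))%:R)); last by move=> B _; rewrite mulrDr.
rewrite big_split /= sum_eq mulrDl; apply: lerD.
  by rewrite /pdraw /cnt eqxx.
rewrite natr_sum mulr_suml big_mkcond /=; apply: ler_sum => B _.
case: ifP => [/andP [hB _]|_]; last by rewrite /= mulr0.
rewrite mulr1 /pdraw /cnt; case: eqP => // hBT.
by move: hB; rewrite hBT setT_notin_cls.
Qed.


Lemma D_lb x (As : {set 'I_k}) : (1 < k)%N -> As \in cls ->
  (x set0)%:R * (\sum_(j : 'I_k) pdl R x set0 j) +
  (x As)%:R * (\sum_(j : 'I_k) pdl R x As j) +
  (\sum_(A : {set 'I_k} | mid A) x A)%N%:R * pdraw R x [set: 'I_k]
  <= \sum_(A : {set 'I_k}) \sum_(j : 'I_k) (x A)%:R * pdl R x A j.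
Proof.
move=> hk hAs.
have hAc : #|As| = k.-1 by move: hAs; rewrite inE => /eqP.
have hAs0 : As != set0.
  by apply/eqP => h; move: hAc; rewrite h cards0; lia.
set F := fun A : {set 'I_k} => (x A)%:R * \sum_(j : 'I_k) pdl R x A j.
have F0 A : 0 <= F A.
  by rewrite /F mulr_ge0 ?ler0n // sumr_ge0 // => j _; exact: pdl_ge0.
rewrite [X in _ <= X](eq_bigr F); last by move=> A _; rewrite /F mulr_sumr.
rewrite [X in _ <= X](bigD1 set0) //= [X in _ <= _ + X](bigD1 As) //= addrA.
apply: lerD; first by [].
apply: le_trans (_ : \sum_(A : {set 'I_k} | mid A) F A <= _).
  rewrite natr_sum mulr_suml; apply: ler_sum => A /and3P [h0 hT h1].
  rewrite /F; apply: ler_wpM2l; first exact: ler0n.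
  by apply: Pmid_lb => //; rewrite cards_eq0.
rewrite [X in _ <= X](bigID mid) /=.
have -> : \sum_(A : {set 'I_k} | (A != set0) && (A != As) && mid A) F A =
          \sum_(A : {set 'I_k} | mid A) F A.
  apply: eq_bigl => A; case hm: (mid A); rewrite ?andbF ?andbT //.
  case/and3P: hm => h0 _ h1; rewrite h0 /=.
  by apply: contraNneq h1 => ->; rewrite hAc.
by rewrite lerDl sumr_ge0.
Qed.

End Drift.

Unset Implicit Arguments.
Local Open Scope ring_scope.

Theorem mainTheorem6 (R : realFieldType) (k : nat) (hk : (2 <= k)%N)
  (lam : R) (hlam0 : 0 < lam) (hlam1 : lam <= (3 * k)%:R^-1) :
  exists eps : R, 0 < eps /\
    forall x : state k, x [set: 'I_k] = 0%N ->
      (3 * k ^ 3 < Stot x)%N ->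
      drift lam (@L1 k R) x < - eps.
Proof.
exists (1/10); split; first by rewrite divr_gt0 ?ltr01 ?ltr0n.
move=> x hxT hS.
have hk1 : (1 < k)%N by [].
have hk0 : (0 < k)%N by lia.
have [As hAs hMax] := @eq_bigmax_cond _ (mem (@cls k)) (fun B : {set 'I_k} => x B)
  ltac:(by rewrite card_cls).
have hAc : #|As| = k.-1 by move: hAs; rewrite inE => /eqP.
have hAT : As != [set: 'I_k].
  by apply/eqP => h; move: hAc; rewrite h cardsT card_ord; lia.
have [j hj] : exists j, j \notin As.
  by case/set0Pn: (setC_neq0 hAT) => j; rewrite inE => hj; exists j.
set M := x As.
set n0 := x set0.
set nm := (\sum_(B : {set 'I_k} | mid B) x B)%N.
set n3 := (\sum_(B in cls k) x B)%N.
set rest := (\sum_(B in cls k | B != As) x B)%N.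
have e3 : n3 = (M + rest)%N by rewrite /n3 (bigD1 As).
have hn3k : (n3 <= k * M)%N.
  apply: leq_trans (_ : (\sum_(B in cls k) M <= _)%N).
    apply: leq_sum => B hB; rewrite /M -hMax; exact: leq_bigmax_cond.
  by rewrite sum_nat_const card_cls.
have hSd : Stot x = (1 + n0 + nm + n3)%N := Stot_decomp x hk1.
rewrite driftE.
have hlam : lam * k%:R <= 1/3.
  have hk0' : (k%:R : R) != 0 by rewrite pnatr_eq0 -lt0n.
  apply: le_trans (_ : (3 * k)%:R^-1 * k%:R <= _).
    by apply: ler_wpM2r; rewrite ?ler0n.
  by rewrite natrM invfM -mulrA mulVf // mulr1 div1r.
suff hD : 9/20 <= \sum_(A : {set 'I_k}) \sum_(j : 'I_k) (x A)%:R * pdl R x A j by lra.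
apply: (le_trans _ (D_lb R x hk1 hAs)).
set S := (Stot x)%:R : R.
have Sp : 0 < S by exact: SR_gt0.
have pT : pdraw R x [set: 'I_k] = 1 / S by rewrite /pdraw /cnt eqxx.
have p0 : pdraw R x set0 = n0%:R / S.
  by rewrite /pdraw /cnt eq_sym (negPf (setT_neq0 hk0)).
have pA : pdraw R x As = M%:R / S by rewrite /pdraw /cnt (negPf hAT).
have P0 := @P0_lb R k x hk0.
have P3 := @P3_lb R k x As j hk1 hAc hj.
have H := @h_lb R k x As j hk1 hAs hj.
rewrite p0 in P0; rewrite pA in P3.
apply: le_trans (_ : n0%:R * (3 * (n0%:R / S) ^+ 2 * (1 - n0%:R / S)) + M%:R *
   (3 * (M%:R / S) ^+ 2 * ((1 + (n3%:R - M%:R)) / S)) + nm%:R * (1 / S) <= _).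
  rewrite addrAC mul1r.
  apply: (@Nfinal R S n0%:R nm%:R n3%:R M%:R k%:R).
  - by rewrite ler_nat.
  - have h := hS; rewrite -(ler_nat R) -addn1 natrD natrM natrX in h; exact: h.
  - exact: ler0n.
  - exact: ler0n.
  - exact: ler0n.
  - by rewrite ler_nat e3 leq_addr.
  - by rewrite -natrM ler_nat.
  - by rewrite /S hSd !natrD.
rewrite pT; apply: lerD; last by [].
apply: lerD; first by apply: ler_wpM2l; rewrite ?ler0n.
apply: ler_wpM2l; first exact: ler0n.
apply: le_trans P3; apply: ler_wpM2l.
  by rewrite mulr_ge0 ?exprn_ge0 ?divr_ge0 ?ler0n // ltW.
by rewrite e3 natrD addrAC subrr add0r.
Qed.
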